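(* Let $M$ be any infinite subset of a finite-dimensional real Banach space (viewed as a pointed metric space with the induced metric) and let $Y$ be an infinite-dimensional real Banach space. Then $\mathrm{A}(M,Y)\subsetneqq\mathrm{Lip}_0(M,Y)$.
   Context: Throughout, metric spaces are complete and pointed, with a base point $0$. $\mathrm{Lip}_0(M,Y)$ is the Banach space of Lipschitz maps $f:M\to Y$ with $f(0)=0$, normed by $\|f\|=\sup_{p\neq q}\|f(p)-f(q)\|/d(p,q)$. A map $f$ attains its norm toward $y\in Y$ if there is a sequence $(p_n,q_n)$ in $M\times M$ with $p_n\neq q_n$ such that $[f(p_n)-f(q_n)]/d(p_n,q_n)\to y$ and $\|y\|=\|f\|$; $\mathrm{A}(M,Y)$ is the set of $f$ attaining their norm toward some vector. *)

(* Defs.v *)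
From HB Require Import structures.
From mathcomp Require Import all_boot all_order all_algebra.
From mathcomp Require Import all_classical all_reals all_analysis.
Set Implicit Arguments. Unset Strict Implicit. Unset Printing Implicit Defensive.
Import Order.TTheory GRing.Theory Num.Theory.
Import numFieldNormedType.Exports.
Local Open Scope classical_set_scope.
Local Open Scope ring_scope.

Definition finite_dim (R : realType) (X : normedModType R) : Prop :=
  exists (n : nat) (e : 'I_n -> X),
    forall x : X, exists c : 'I_n -> R, x = \sum_(i < n) c i *: e i.

(* Maps are represented
   by functions X -> Y; only their values on M matter. *)
Definition Lip0 (R : realType) (X Y : normedModType R) (M : set X) (b : X)
  : set (X -> Y) :=
  [set f | f b = 0 /\
     exists L : R, forall p q, M p -> M q -> `|f p - f q| <= L * `|p - q| ].

Definition slopes (R : realType) (X Y : normedModType R) (M : set X)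
  (f : X -> Y) : set R :=
  [set r | exists p q, [/\ M p, M q, p <> q & r = `|f p - f q| / `|p - q| ] ].

Definition lipnorm (R : realType) (X Y : normedModType R) (M : set X)
  (f : X -> Y) : R := sup (slopes M f).

Definition attains_toward (R : realType) (X Y : normedModType R) (M : set X)
  (f : X -> Y) (y : Y) : Prop :=
  `|y| = lipnorm M f /\
  exists p q : nat -> X,
    (forall n, [/\ M (p n), M (q n) & p n <> q n]) /\
    (fun n => (`|p n - q n|)^-1 *: (f (p n) - f (q n))) @ \oo --> y.

Definition NA (R : realType) (X Y : normedModType R) (M : set X) (b : X)
  : set (X -> Y) :=
  [set f | Lip0 M b f /\ exists y : Y, attains_toward M f y].

(* Main.v *)
Require Import Defs.
From HB Require Import structures.
From mathcomp Require Import all_boot all_order all_algebra.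
From mathcomp Require Import all_classical all_reals all_analysis.
From mathcomp Require Import ring lra.
Set Implicit Arguments. Unset Strict Implicit. Unset Printing Implicit Defensive.
Import Order.TTheory GRing.Theory Num.Theory.
Import numFieldNormedType.Exports.
Local Open Scope classical_set_scope.
Local Open Scope ring_scope.
Section PartA.
Variable R : realType.

Definition cv (V : normedModType R) (u : nat -> V) (l : V) :=
  forall eps : R, 0 < eps -> exists N, forall k, (N <= k)%N -> `|l - u k| < eps.

Lemma cvP (V : normedModType R) (u : nat -> V) l : u @ \oo --> l <-> cv u l.
Proof.
rewrite cvgrPdist_lt; split => H eps he.
  by have [N _ HN] := H eps he; exists N => k Nk; exact: HN.
have [N HN] := H eps he; exists N => // k Nk; exact: HN.
Qed.

Definition incr (phi : nat -> nat) := forall k, (phi k < phi k.+1)%N.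

Lemma incr_mono phi : incr phi -> forall m n, (m <= n)%N -> (phi m <= phi n)%N.
Proof.
move=> hp m n /subnK <-; elim: (n - m)%N => [|d IH] //=.
by rewrite addSn; apply: leq_trans IH (ltnW (hp _)).
Qed.

Lemma incr_ge phi : incr phi -> forall k, (k <= phi k)%N.
Proof. by move=> hp; elim=> [|k IH] //; apply: leq_ltn_trans IH (hp k). Qed.

Lemma incr_lt phi : incr phi -> forall m n, (m < n)%N -> (phi m < phi n)%N.
Proof. by move=> hp m n mn; apply: leq_trans (hp m) (incr_mono hp mn). Qed.

Lemma incr_comp phi psi : incr phi -> incr psi -> incr (phi \o psi).
Proof. by move=> hp hq k /=; apply: incr_lt. Qed.

Lemma cv_subseq (V : normedModType R) (u : nat -> V) l phi :
  incr phi -> cv u l -> cv (u \o phi) l.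
Proof.
move=> hp hu eps he; have [N HN] := hu eps he; exists N => k Nk /=.
by apply: HN; apply: leq_trans Nk (incr_ge hp k).
Qed.

Lemma cv_unique (V : normedModType R) (u : nat -> V) l l' :
  cv u l -> cv u l' -> l = l'.
Proof.
move=> h1 h2; apply/eqP; rewrite -subr_eq0 -normr_le0.
apply/ler_addgt0Pr => eps he; rewrite add0r.
have [N1 H1] := h1 (eps / 2) (divr_gt0 he (ltr0Sn _ 1)).
have [N2 H2] := h2 (eps / 2) (divr_gt0 he (ltr0Sn _ 1)).
have := H1 (maxn N1 N2) (leq_maxl _ _); have := H2 (maxn N1 N2) (leq_maxr _ _).
set w := u _ => a b.
have -> : l - l' = (l - w) - (l' - w) by rewrite opprB addrA subrK.
apply: le_trans (ler_normB _ _) _.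
by rewrite (splitr eps); apply: ltW; apply: ltrD.
Qed.

Lemma cv_comb (V : normedModType R) (f : nat -> V) (t : nat -> R) (v z : V) (T : R) :
  cv f z -> cv t T -> cv (fun k => f k + t k *: v) (z + T *: v).
Proof.
move=> hf ht eps he.
have he2 : 0 < eps / 2 by rewrite divr_gt0.
have hv : 0 < `|v| + 1 by rewrite ltr_wpDl.
have [N1 H1] := hf _ he2.
have [N2 H2] := ht (eps / 2 / (`|v| + 1)) (divr_gt0 he2 hv).
exists (maxn N1 N2) => k Nk.
have k1 := H1 k (leq_trans (leq_maxl _ _) Nk).
have k2 := H2 k (leq_trans (leq_maxr _ _) Nk).
have -> : z + T *: v - (f k + t k *: v) = (z - f k) + (T - t k) *: v.
  by rewrite scalerBl; rewrite opprD !addrA; congr (_ + _); rewrite addrAC.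
apply: le_lt_trans (ler_normD _ _) _.
rewrite (splitr eps); apply: ltr_leD => //.
rewrite normrZ; apply: (@le_trans _ _ (`|T - t k| * (`|v| + 1))).
  by apply: ler_wpM2l => //; rewrite lerDl.
by rewrite -ler_pdivlMr // ltW.
Qed.
Lemma BW_R (t : nat -> R) C : (forall k, `|t k| <= C) ->
  exists phi T, incr phi /\ cv (t \o phi) T.
Proof.
move=> hC.
have bt : bounded_fun t.
  exists C; split; first exact: num_real.
  move=> M CM k _ /=; apply: le_trans (hC k) (ltW CM).
have [phi hphi hcv] := bolzano_weierstrass bt.
exists phi, (limn (t \o phi)); split.
  by move=> k; move/increasing_seqP: hphi; exact.
exact/cvP.
Qed.
Definition span (V : normedModType R) (e : nat -> V) n : set V :=
  [set v | exists c : nat -> R, v = \sum_(i < n) c i *: e i].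

Definition BWP (V : normedModType R) (S : set V) :=
  forall (w : nat -> V) B, (forall k, S (w k)) -> (forall k, `|w k| <= B) ->
  exists phi z, [/\ incr phi, S z & cv (w \o phi) z].

Lemma closed_of_BWP (V : normedModType R) (S : set V) : BWP S ->
  forall z, ~ S z -> exists2 d, 0 < d & forall g, S g -> d <= `|z - g|.
Proof.
move=> hS z nSz; apply: contrapT => hn.
have hk : forall k : nat, exists g, S g /\ `|z - g| < (k.+1%:R)^-1.
  move=> k; apply: contrapT => hk; apply: hn; exists (k.+1%:R)^-1 => //.
  move=> g Sg; rewrite leNgt; apply/negP => lt; apply: hk; by exists g.
have [gs hgs] := choice hk.
have bnd : forall k, `|gs k| <= `|z| + 1.
  move=> k; have [_ h] := hgs k.
  have -> : gs k = z - (z - gs k) by rewrite opprB addrC subrK.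
  apply: le_trans (ler_normB _ _) _; rewrite lerD2l; apply: ltW; apply: lt_le_trans h _.
  by rewrite invf_le1 // ler1n.
have [phi [z' [hphi Sz' hcv]]] := hS gs _ (fun k => (hgs k).1) bnd.
have cz : cv gs z.
  move=> eps he; exists (Num.Def.archi_bound eps^-1) => k Nk.
  have [_ h] := hgs k; apply: lt_trans h _.
  rewrite -[eps]invrK ltf_pV2 ?posrE ?invr_gt0 //.
  apply: lt_le_trans (archi_boundP _) _; first by rewrite invr_ge0 ltW.
  by rewrite ler_nat (leq_trans Nk).
have := cv_unique (cv_subseq hphi cz) hcv.
by move=> E; apply: nSz; rewrite E.
Qed.

Lemma span0 (V : normedModType R) (e : nat -> V) n : span e n 0.
Proof. by exists (fun=> 0); rewrite big1 // => i _; rewrite scale0r. Qed.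

Lemma spanZ (V : normedModType R) (e : nat -> V) n t g : span e n g -> span e n (t *: g).
Proof.
case=> c ->; exists (fun i => t * c i); rewrite scaler_sumr.
by apply: eq_bigr => i _; rewrite scalerA.
Qed.

Lemma spanD (V : normedModType R) (e : nat -> V) n g h :
  span e n g -> span e n h -> span e n (g + h).
Proof.
case=> c -> [d ->]; exists (fun i => c i + d i); rewrite -big_split.
by apply: eq_bigr => i _; rewrite scalerDl.
Qed.

Lemma spanS (V : normedModType R) (e : nat -> V) n v :
  span e n.+1 v <-> exists f t, span e n f /\ v = f + t *: e n.
Proof.
split.
  case=> c ->; exists (\sum_(i < n) c i *: e i), (c n); split; first by exists c.
  by rewrite big_ord_recr.
case=> f [t [[c ->] ->]]; exists (fun i => if (i < n)%N then c i else t).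
rewrite big_ord_recr /= ltnn; congr (_ + _).
by apply: eq_bigr => i _; rewrite ltn_ord.
Qed.

Lemma span_sub (V : normedModType R) (e : nat -> V) n : span e n `<=` span e n.+1.
Proof. by move=> v Sv; apply/spanS; exists v, 0; rewrite scale0r addr0. Qed.
Lemma span_BWP (V : normedModType R) (e : nat -> V) n : BWP (span e n).
Proof.
elim: n => [|n IH].
  move=> w B hw hB; exists id, 0; split => //; first exact: span0.
  move=> eps he; exists 0%N => k _ /=.
  by have [c ->] := hw k; rewrite big_ord0 subr0 normr0.
have [He|nHe] := pselect (span e n (e n)).
  have sub : span e n.+1 `<=` span e n.
    move=> v /spanS [f [t [Sf ->]]]; apply: spanD => //; exact: spanZ.
  move=> w B hw hB; have [phi [z [h1 h2 h3]]] := IH w B (fun k => sub _ (hw k)) hB.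
  by exists phi, z; split => //; apply: span_sub.
have [d hd hfar] := closed_of_BWP IH nHe.
have lower : forall f t, span e n f -> `|t| * d <= `|f + t *: e n|.
  move=> f t Sf; have [->|t0] := eqVneq t 0; first by rewrite normr0 mul0r.
  have -> : f + t *: e n = t *: (e n - (- t^-1) *: f).
    by rewrite scalerBr scalerA mulrN divff // scaleNr opprK scale1r addrC.
  by rewrite normrZ ler_wpM2l // hfar //; apply: spanZ.
move=> w B hw hB.
have hg' : forall k, exists p : V * R, span e n p.1 /\ w k = p.1 + p.2 *: e n.
  move=> k; have [f [t ht]] := (proj1 (spanS e n (w k))) (hw k); by exists (f, t).
have [p hp] := choice hg'.
pose fs k := (p k).1; pose ts k := (p k).2.
have tsb : forall k, `|ts k| <= B / d.
  move=> k; rewrite ler_pdivlMr //; apply: le_trans (lower _ _ (hp k).1) _.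
  by rewrite -(hp k).2.
have [phi1 [T [hphi1 hT]]] := BW_R tsb.
have fsb : forall k, `|(fs \o phi1) k| <= B + B / d * `|e n|.
  move=> k /=; have -> : fs (phi1 k) = w (phi1 k) - ts (phi1 k) *: e n.
    by rewrite (hp _).2 addrK.
  apply: le_trans (ler_normB _ _) _; apply: lerD => //.
  by rewrite normrZ ler_wpM2r.
have [phi2 [z' [hphi2 Sz' hz']]] := IH (fs \o phi1) _ (fun k => (hp _).1) fsb.
exists (phi1 \o phi2), (z' + T *: e n); split.
- exact: incr_comp.
- by apply/spanS; exists z', T.
have -> : w \o (phi1 \o phi2) =
   (fun k => ((fs \o phi1) \o phi2) k + ((ts \o phi1) \o phi2) k *: e n).
  by apply/funext => k; rewrite /= (hp _).2.
by apply: cv_comb => //; apply: cv_subseq.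
Qed.
Lemma fd_BWP (X : normedModType R) : finite_dim X -> BWP [set: X].
Proof.
move=> [n [e he]].
pose e' k := if @insub _ (fun k => (k < n)%N) 'I_n k is Some i then e i else 0.
have sp : forall x : X, span e' n x.
  move=> x; have [c ->] := he x.
  exists (fun k => if @insub _ (fun k => (k < n)%N) 'I_n k is Some i then c i else 0).
  by apply: eq_bigr => i _; rewrite /e' valK.
move=> w B _ hB; have [phi [z [h1 _ h3]]] := span_BWP (fun k => sp (w k)) hB.
by exists phi, z.
Qed.

Lemma dichot (X : normedModType R) (M : set X) b : finite_dim X -> infinite_set M ->
  closed M ->
  (forall r, exists x, M x /\ r <= `|x - b|) \/
  (exists c, M c /\ forall eps, 0 < eps ->
      exists x, [/\ M x, 0 < `|x - c| & `|x - c| < eps]).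
Proof.
move=> fd hinf hcl.
have [U|nU] := pselect (forall r, exists x, M x /\ r <= `|x - b|); first by left.
right.
have [r hr] : exists r, forall x, M x -> `|x - b| < r.
  apply: contrapT => h; apply: nU => r; apply: contrapT => h2; apply: h.
  exists r => x Mx; rewrite ltNge; apply/negP => le; apply: h2; by exists x.
have /infiniteP/ppcard_leP[f] := hinf.
have fM : forall k, M (f k) by move=> k; apply: (@funS _ _ _ _ f k).
have finj : forall k l, f k = f l -> k = l by move=> k l; apply: (@inj _ _ _ f); rewrite ?in_setE.
have fb : forall k, `|f k| <= `|b| + r.
  move=> k; have -> : f k = b + (f k - b) by rewrite addrC subrK.
  by apply: le_trans (ler_normD _ _) _; rewrite lerD2l ltW // hr.
have [phi [z [hphi _ hz]]] := fd_BWP fd (fun k => I) fb.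
have Mz : M z.
  apply: (closed_cvg (F := \oo) (u_ := f \o phi) M hcl _ z (proj2 (cvP _ _) hz)).
  by apply: nearW => k; apply: fM.
exists z; split => // eps he.
have [N HN] := hz eps he.
have [E|NE] := eqVneq (f (phi N)) z.
  exists (f (phi N.+1)); split => //.
  - rewrite normr_gt0 subr_eq0; apply/eqP => E2.
    have := finj _ _ (etrans E (esym E2)) => E3.
    by have := hphi N; rewrite E3 ltnn.
  - by rewrite distrC HN.
exists (f (phi N)); split => //.
- by rewrite normr_gt0 subr_eq0.
- by rewrite distrC HN.
Qed.
Lemma riesz_step (Y : normedModType R) (e : nat -> Y) n z : ~ span e n z ->
  exists u, `|u| = 1 /\ forall g, span e n g -> 1 / 2 <= `|u - g|.
Proof.
move=> nz; have [d hd hfar] := closed_of_BWP (@span_BWP _ e n) nz.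
pose L := [set r | forall g, span e n g -> r <= `|z - g|].
have hL : has_sup L.
  split; first by exists d.
  exists `|z| => r hr; have := hr 0 (span0 _ _); by rewrite subr0.
pose D := sup L.
have dD : d <= D by apply: sup_upper_bound.
have Dpos : 0 < D by apply: lt_le_trans hd dD.
have Dlow : forall g, span e n g -> D <= `|z - g|.
  move=> g Sg; apply: ge_sup; first by exists d.
  by move=> r hr; apply: hr.
have [g0 [Sg0 hg0]] : exists g0, span e n g0 /\ `|z - g0| < 2 * D.
  apply: contrapT => h.
  have : L (2 * D).
    move=> g Sg; rewrite leNgt; apply/negP => lt; apply: h; by exists g.
  move/sup_upper_bound => /(_ hL); rewrite -/D => le2.
  by move: Dpos; rewrite lt_neqAle => /andP[_]; lra.
set m := `|z - g0|.
have mpos : 0 < m by apply: lt_le_trans Dpos (Dlow _ Sg0).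
exists (m^-1 *: (z - g0)); split.
  by rewrite normrZ ger0_norm ?invr_ge0 ?ltW // mulVf // gt_eqF.
move=> g Sg.
have -> : m^-1 *: (z - g0) - g = m^-1 *: (z - (g0 + m *: g)).
  by rewrite scalerBr [in RHS]scalerBr [in RHS]scalerDr scalerA mulVf ?gt_eqF // scale1r opprD addrA.
rewrite normrZ ger0_norm ?invr_ge0 ?ltW //.
have := Dlow _ (spanD Sg0 (spanZ m Sg)).
set q := `|_| => hq.
idtac.
rewrite -/m in hg0.
have im0 : 0 < m^-1 by rewrite invr_gt0.
have h1 : m^-1 * D <= m^-1 * q by rewrite ler_wpM2l // ltW.
have h2 : m^-1 * m < m^-1 * (2 * D) by rewrite ltr_pM2l.
have h3 : m^-1 * m = 1 by rewrite mulVf // gt_eqF.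
lra.
Qed.

Lemma span_mono (V : normedModType R) (e : nat -> V) m n :
  (m <= n)%N -> span e m `<=` span e n.
Proof.
move=> /subnK <-; elim: (n - m)%N => [|k IH] //= v /IH.
by rewrite addSn; apply: span_sub.
Qed.

Lemma span_gen (V : normedModType R) (e : nat -> V) m n :
  (m < n)%N -> span e n (e m).
Proof.
move=> mn; apply: (span_mono mn); apply/spanS; exists 0, 1; split.
  exact: span0.
by rewrite add0r scale1r.
Qed.

Lemma riesz_seq (Y : normedModType R) : ~ finite_dim Y ->
  exists u : nat -> Y, (forall n, `|u n| = 1) /\
    forall m n (l : R), (m < n)%N -> 1 / 2 <= `|u n - l *: u m|.
Proof.
move=> nfd.
have hnext : forall p : (nat -> Y) * nat, exists v : Y,
    `|v| = 1 /\ forall g, span p.1 p.2 g -> 1 / 2 <= `|v - g|.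
  case=> s k /=.
  have [z nz] : exists z, ~ span s k z.
    apply: contrapT => h; apply: nfd.
    exists k, (fun i : 'I_k => s i) => x.
    have [c ->] : span s k x by apply: contrapT => h2; apply: h; exists x.
    by exists (fun i : 'I_k => c i).
  exact: riesz_step nz.
have [nx hnx] := choice hnext.
pose U := fix U k := match k with 0%N => fun _ : nat => (0 : Y)
  | k'.+1 => fun i => if (i < k')%N then U k' i else nx (U k', k') end.
pose u k := U k.+1 k.
have uE : forall k, u k = nx (U k, k) by move=> k; rewrite /u /= ltnn.
have agree : forall k i, (i < k)%N -> U k i = u i.
  elim=> [//|k IH] i; rewrite ltnS leq_eqVlt => /orP[/eqP ->|lt].
    by rewrite /= ltnn uE.
  by rewrite /= lt IH.
have spE : forall k g, span u k g -> span (U k) k g.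
  move=> k g [c ->]; exists c; apply: eq_bigr => i _.
  by rewrite agree.
exists u; split.
  by move=> n; rewrite uE; apply: (hnx (U n, n)).1.
move=> m n l mn; rewrite uE; apply: (hnx (U n, n)).2 => /=.
by apply: spE; apply: spanZ; apply: span_gen.
Qed.
End PartA.

Definition hh (R : realType) (n : nat) : R := (2^-1) ^+ n.+1.
Definition ee (R : realType) (n : nat) : R := hh R n / 20.
Definition aa (R : realType) (n : nat) : R := 1 - hh R n.

Lemma hh_pos (R : realType) n : 0 < hh R n.
Proof. by rewrite /hh exprn_gt0 // invr_gt0. Qed.

Lemma hhS (R : realType) n : hh R n.+1 = hh R n / 2.
Proof. by rewrite /hh exprS mulrC. Qed.

Lemma hh_le (R : realType) n : hh R n <= 1 / 2.
Proof.
elim: n => [|n IH]; first by rewrite /hh expr1 mul1r.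
rewrite hhS; have := hh_pos R n; lra.
Qed.

Lemma divle (R : realType) (d z C : R) : 0 < d -> z <= C * d -> d^-1 * z <= C.
Proof.
move=> d0 h; rewrite -(ler_pM2l d0) mulrA mulfV ?gt_eqF // mul1r mulrC //.
Qed.

Definition pp (R : realType) (A : R) := (A + `|A|) / 2.

Lemma pplip (R : realType) (A B : R) : `|pp A - pp B| <= `|A - B|.
Proof.
rewrite /pp -mulrBl normrM (ger0_norm (x := 2^-1)) ?invr_ge0 //.
have h := ler_dist_dist A B.
have := ler_normD (A - B) (`|A| - `|B|).
have -> : A - B + (`|A| - `|B|) = A + `|A| - (B + `|B|) by rewrite addrACA opprD.
move=> h2; lra.
Qed.

Lemma pp_ge0 (R : realType) (A : R) : 0 <= pp A.
Proof. rewrite /pp divr_ge0 //; have := ler_norm (- A); rewrite normrN; lra. Qed.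

Lemma pp_neg (R : realType) (A : R) : A <= 0 -> pp A = 0.
Proof. by move=> h; rewrite /pp ler0_norm // subrr mul0r. Qed.

Lemma pp_le (R : realType) (A : R) : 0 <= A -> pp A = A.
Proof. by move=> h; rewrite /pp ger0_norm //; lra. Qed.

Lemma vsub3 (V : zmodType) (a b c : V) : a - c = (a - b) + (b - c).
Proof. by rewrite addrA subrK. Qed.

Lemma vid (V : zmodType) (a b e e' : V) : (a - e) - (b - e') = (a - b) - e + e'.
Proof. by rewrite opprB addrA [a - b - e]addrAC addrAC. Qed.

Section PartC.
Variables (R : realType) (X Y : normedModType R) (M : set X) (b : X) (u : nat -> Y).
Hypothesis hu1 : forall n, `|u n| = 1.
Hypothesis hu2 : forall m n (l : R), (m < n)%N -> 1 / 2 <= `|u n - l *: u m|.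
Variables (c : X) (x : nat -> X).
Hypothesis Mc : M c.
Hypothesis Mx : forall n, M (x n).
Let t n := `|x n - c|.
Hypothesis tpos : forall n, 0 < t n.
Let rho n := (1 - ee R n) * t n.
Hypothesis Hb : forall n, rho n <= `|b - x n|.
Hypothesis Hsep : forall n m, n <> m ->
  3 * t m <= ee R n * ee R n * t n \/ 3 * t n <= ee R m * ee R m * t m.

Let S n p := `|p - x n| < rho n.
Let phi n p := aa R n * pp (rho n - `|p - x n|).

Lemma ee_pos n : 0 < ee R n.
Proof. by rewrite /ee divr_gt0 ?hh_pos. Qed.
Lemma ee_le n : ee R n <= 1 / 40.
Proof. rewrite /ee; have := hh_le R n; lra. Qed.
Lemma aa_ge0 n : 0 <= aa R n.
Proof. rewrite /aa; have := hh_le R n; lra. Qed.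
Lemma aa_le1 n : aa R n <= 1.
Proof. rewrite /aa; have := hh_pos R n; lra. Qed.

Lemma rho_pos n : 0 < rho n.
Proof. by rewrite /rho mulr_gt0 //; have := ee_le n; lra. Qed.
Lemma rho_le n : rho n <= t n.
Proof.
rewrite /rho; have := ee_pos n; have := tpos n; move=> h1 h2.
rewrite mulrBl mul1r; have : 0 <= ee R n * t n by rewrite mulr_ge0 // ltW.
lra.
Qed.

Lemma phi_ge0 n p : 0 <= phi n p.
Proof. by rewrite /phi mulr_ge0 ?aa_ge0 ?pp_ge0. Qed.

Lemma phi_out n p : ~ S n p -> phi n p = 0.
Proof.
move=> h; rewrite /phi pp_neg ?mulr0 //.
by rewrite subr_le0 leNgt; apply/negP.
Qed.

Lemma phi_lip n p q : `|phi n p - phi n q| <= aa R n * `|p - q|.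
Proof.
rewrite /phi -mulrBr normrM ger0_norm ?aa_ge0 //; apply: ler_wpM2l; first exact: aa_ge0.
apply: le_trans (pplip _ _) _.
have -> : rho n - `|p - x n| - (rho n - `|q - x n|) = `|q - x n| - `|p - x n|.
  by ring.
apply: le_trans (ler_dist_dist _ _) _.
by rewrite opprB addrA subrK distrC.
Qed.

Lemma phi_le_t n p : phi n p <= t n.
Proof.
have [h|h] := pselect (S n p); last by rewrite phi_out //; exact: ltW (tpos n).
rewrite /phi pp_le; last by rewrite subr_ge0 ltW.
have hA : 0 <= rho n - `|p - x n| by rewrite subr_ge0 ltW.
have := ler_piMl hA (aa_le1 n); have := rho_le n; have := normr_ge0 (p - x n); lra.
Qed.

Lemma G1 n p : S n p -> ee R n * t n < `|p - c| /\ `|p - c| < 2 * t n.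
Proof.
rewrite /S => h; split.
  have : t n <= `|p - x n| + `|p - c|.
    rewrite /t (vsub3 _ p); apply: le_trans (ler_normD _ _) _; by rewrite distrC.
  move: h; rewrite /rho mulrBl mul1r; lra.
have : `|p - c| <= `|p - x n| + t n.
  rewrite /t (vsub3 _ (x n)); exact: ler_normD.
have := rho_le n; lra.
Qed.

Lemma G2 n m p : n <> m -> S n p -> S m p -> False.
Proof.
move=> nm /G1 [h1 h1'] /G1 [h2 h2'].
have k : ee R n * ee R n * t n <= ee R n * t n.
  rewrite -mulrA; apply: ler_piMl; first by rewrite mulr_ge0 // ltW ?ee_pos ?tpos.
  have := ee_le n; lra.
have k' : ee R m * ee R m * t m <= ee R m * t m.
  rewrite -mulrA; apply: ler_piMl; first by rewrite mulr_ge0 // ltW ?ee_pos ?tpos.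
  have := ee_le m; lra.
have t1 := tpos n; have t2 := tpos m.
have ee1 := ee_pos n; have ee2 := ee_pos m.
have [h|h] := Hsep nm; move: h1 h1' h2 h2' k k' t1 t2 h ee1 ee2;
  generalize (t n) (t m) (ee R n) (ee R m) (`|p - c|) => ? ? ? ? ?; nra.
Qed.

Lemma G3 n m p q : 3 * t m <= ee R n * ee R n * t n -> S n p -> S m q ->
  phi m q <= ee R n * `|p - q|.
Proof.
move=> h /G1 [h1 _] /G1 [_ h2].
have h3 : `|p - c| - `|q - c| <= `|p - q|.
  rewrite (vsub3 p q c); have := ler_normD (p - q) (q - c); lra.
have e1 : ee R n * (`|p - c| - `|q - c|) <= ee R n * `|p - q|.
  by rewrite ler_wpM2l // ltW // ee_pos.
have e2 := ee_le n; have e3 := ee_pos n; have e4 := phi_le_t m q.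
have e5 : ee R n * t m <= t m by rewrite ler_piMl // ?ltW ?tpos //; lra.
move: h h1 h2 h3 e1 e2 e3 e4 e5; rewrite -mulrA.
generalize (t n) (t m) (ee R n) (`|p - c|) (`|q - c|) (`|p - q|) (phi m q).
move=> ? ? ? ? ? ? ? ; nra.
Qed.

Let kidx p := xget 0%N [set n | S n p].
Let F p := phi (kidx p) p *: u (kidx p).

Lemma kidxE n p : S n p -> kidx p = n.
Proof.
move=> h; have : S (kidx p) p by apply: (xgetPex 0%N (P := [set n | S n p])); exists n.
move=> h2; apply: contrapT => nk; exact: G2 nk h2 h.
Qed.

Lemma kidx_out n p : n <> kidx p -> ~ S n p.
Proof. by move=> nk h; apply: nk; rewrite (kidxE h). Qed.

Lemma normZu (s : R) k : `|s *: u k| = `|s|.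
Proof. by rewrite normrZ hu1 mulr1. Qed.

Lemma typ p q : p <> q -> exists k (g : R) (e : Y),
  `|p - q|^-1 *: (F p - F q) = g *: u k + e /\ `|g| <= aa R k /\ `|e| <= ee R k.
Proof.
move=> pq; set d := `|p - q|.
have d0 : 0 < d by rewrite normr_gt0 subr_eq0; apply/eqP.
have di : 0 <= d^-1 by rewrite invr_ge0; exact: ltW.
have eN : forall k, 0 <= ee R k by move=> k; exact: ltW (ee_pos k).
rewrite /F; set i := kidx p; set j := kidx q.
have [ij|ij] := eqVneq i j.
  rewrite -ij; exists i, (d^-1 * (phi i p - phi i q)), 0; split.
    by rewrite addr0 -scalerBl scalerA.
  split; last by rewrite normr0.
  rewrite normrM (ger0_norm di); apply: divle => //; exact: phi_lip.
have ij' : i <> j by apply/eqP.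
have qi : phi i q = 0 by apply: phi_out; apply: kidx_out.
have pj : phi j p = 0.
  by apply: phi_out; apply: kidx_out => E; apply: ij'; rewrite E.
have al : phi i p <= aa R i * d.
  by have := phi_lip i p q; rewrite qi subr0 ger0_norm ?phi_ge0.
have be : phi j q <= aa R j * d.
  by have := phi_lip j q p; rewrite pj subr0 ger0_norm ?phi_ge0 // distrC.
have claim : phi j q <= ee R i * d \/ phi i p <= ee R j * d.
  have [Sip|Sip] := pselect (S i p); last first.
    by right; rewrite phi_out // mulr_ge0 // ltW.
  have [Sjq|Sjq] := pselect (S j q); last first.
    by left; rewrite phi_out // mulr_ge0 // ltW.
  have [h|h] := Hsep ij'.
    by left; apply: G3 h Sip Sjq.
  by right; rewrite /d distrC; apply: G3 h Sjq Sip.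
have E : d^-1 *: (phi i p *: u i - phi j q *: u j) =
    (d^-1 * phi i p) *: u i + (- (d^-1 * phi j q)) *: u j.
  by rewrite scalerBr !scalerA scaleNr.
have n1 : `|d^-1 * phi i p| = d^-1 * phi i p.
  by rewrite ger0_norm // mulr_ge0 // phi_ge0.
have n2 : `|d^-1 * phi j q| = d^-1 * phi j q.
  by rewrite ger0_norm // mulr_ge0 // phi_ge0.
case: claim => h.
  exists i, (d^-1 * phi i p), ((- (d^-1 * phi j q)) *: u j); split => //.
  rewrite normZu normrN n1 n2.
  by split; apply: divle.
exists j, (- (d^-1 * phi j q)), ((d^-1 * phi i p) *: u i); split.
  by rewrite E addrC.
rewrite normZu normrN n1 n2.
by split; apply: divle.
Qed.

Lemma riesz2 T T' (g g' a : R) : T <> T' -> 0 <= a -> a <= `|g| -> a <= `|g'| ->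
  a / 2 <= `|g *: u T - g' *: u T'|.
Proof.
have key : forall T T' (g g' : R), (T' < T)%N -> `|g| / 2 <= `|g *: u T - g' *: u T'|.
  move=> {}T {}T' {}g {}g' lt.
  have [->|g0] := eqVneq g 0; first by rewrite normr0 mul0r normr_ge0.
  have -> : g *: u T - g' *: u T' = g *: (u T - (g' / g) *: u T').
    by rewrite scalerBr scalerA mulrCA divff // mulr1.
  rewrite normrZ; have := hu2 (g' / g) lt; have := normr_ge0 g.
  move=> h1 h2; apply: le_trans (_ : `|g| * (1 / 2) <= _).
    by rewrite mul1r.
  by apply: ler_wpM2l.
move=> TT a0 ag ag'.
have [lt|gt|eq] := ltngtP T T'; last by [].
  have := key T' T g' g lt; rewrite distrC; lra.
have := key T T' g g' gt; lra.
Qed.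

Lemma Q_le p q : p <> q -> `| `|p - q|^-1 *: (F p - F q)| <= 1.
Proof.
move=> pq; have [k [g [e [-> [hg he]]]]] := typ pq.
apply: le_trans (ler_normD _ _) _; rewrite normZu.
have := hh_pos R k; rewrite /aa /ee in hg he *; lra.
Qed.

Lemma slopeE p q : `|F p - F q| / `|p - q| = `| `|p - q|^-1 *: (F p - F q)|.
Proof.
by rewrite normrZ ger0_norm ?invr_ge0 ?normr_ge0 // mulrC.
Qed.

Lemma F_out p : (forall n, ~ S n p) -> F p = 0.
Proof. by move=> h; rewrite /F phi_out ?scale0r. Qed.

Lemma F_lip0 : Lip0 M b F.
Proof.
split.
  by apply: F_out => n; rewrite /S ltNge Hb.
exists 1 => p q _ _; rewrite mul1r.
have [->|pq] := eqVneq p q; first by rewrite !subrr normr0.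
have pq' : p <> q by apply/eqP.
have d0 : 0 < `|p - q| by rewrite normr_gt0 subr_eq0.
have := Q_le pq'; rewrite -slopeE ler_pdivrMr // mul1r //.
Qed.

Lemma witness j : slopes M F (aa R j * (1 - ee R j)).
Proof.
exists (x j), c; split => //.
- apply/eqP; rewrite -subr_eq0 -normr_eq0; apply/negP; rewrite gt_eqF //.
  exact: tpos.
have Sj : S j (x j) by rewrite /S subrr normr0 rho_pos.
have Fc : F c = 0.
  by apply: F_out => n; rewrite /S ltNge distrC rho_le.
rewrite Fc subr0 /F (kidxE Sj) normZu /phi subrr normr0 subr0 pp_le; last first.
  exact: ltW (rho_pos j).
rewrite -/(t j) /rho ger0_norm; last by rewrite mulr_ge0 ?aa_ge0 // ltW // rho_pos.
by rewrite mulrA mulfK // gt_eqF // tpos.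
Qed.

Lemma key_num n : aa R n + ee R n < aa R n.+1 * (1 - ee R n.+1).
Proof.
rewrite /aa /ee hhS; have := hh_pos R n; have := hh_le R n.
generalize (hh R n) => h h1 h2.
have h3 : 0 <= h * h by rewrite mulr_ge0 // ltW.
nra.
Qed.

Lemma notNA : ~ NA M b F.
Proof.
case=> _ [y [hy [ps [qs [hpq hcv]]]]].
pose Q k := `|ps k - qs k|^-1 *: (F (ps k) - F (qs k)).
have cQ : cv Q y by apply/cvP.
have hsup : has_sup (slopes M F).
  split; first by exists (aa R 0 * (1 - ee R 0)); exact: witness.
  exists 1 => r [p [q [Mp Mq pq ->]]]; rewrite slopeE; exact: Q_le.
set N := lipnorm M F in hy.
have Nw : forall n, aa R n + ee R n < N.
  move=> n; apply: lt_le_trans (key_num n) _; exact: sup_upper_bound (witness _).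
have qn : forall k, ps k <> qs k by move=> k; have [] := hpq k.
have N0 : 21 / 40 < N.
  have := Nw 0%N; have := hh_le R 0; rewrite /aa /ee; lra.
have [K HK] := cQ (1 / 40) ltac:(lra).
have [T [g [e [EK [hg he]]]]] := typ (qn K).
have sT : 0 < N - (aa R T + ee R T) by rewrite subr_gt0.
have [K' HK'] := cQ _ sT.
pose L := maxn K K'.
have [T' [g' [e' [EL [hg' he']]]]] := typ (qn L).
have yL : `|y - Q L| < N - (aa R T + ee R T) by apply: HK'; exact: leq_maxr.
have yL' : `|y - Q L| < 1 / 40 by apply: HK; exact: leq_maxl.
have yK : `|y - Q K| < 1 / 40 by apply: HK.
have tri : forall k, N <= `|y - Q k| + `|Q k|.
  move=> k; rewrite -hy; have := ler_normD (y - Q k) (Q k); by rewrite subrK.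
have QL : aa R T + ee R T < `|Q L| by have := tri L; lra.
have EK' : Q K = g *: u T + e by [].
have EL' : Q L = g' *: u T' + e' by [].
have bK : `|Q K| <= `|g| + `|e|.
  by rewrite EK'; have := ler_normD (g *: u T) e; rewrite normZu.
have bL : `|Q L| <= `|g'| + `|e'|.
  by rewrite EL'; have := ler_normD (g' *: u T') e'; rewrite normZu.
have TT : T <> T'.
  move=> E; subst T'; lra.
have eT := ee_le T; have eT' := ee_le T'.
have hT : 21 / 40 <= aa R T + ee R T.
  have := hh_le R T; rewrite /aa /ee; lra.
have gK : 19 / 40 <= `|g|.
  have := tri K; lra.
have gL : 19 / 40 <= `|g'|.
  have := tri L; lra.
have R2 := riesz2 (a := 19 / 40) TT ltac:(lra) gK gL.
have D1 : `|Q K - Q L| < 1 / 20.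
  rewrite (vsub3 (Q K) y); have := ler_normD (Q K - y) (y - Q L).
  rewrite (distrC (Q K)); lra.
have D2 : `|g *: u T - g' *: u T'| <= `|Q K - Q L| + `|e| + `|e'|.
  have a1 : g *: u T = Q K - e by rewrite EK' addrK.
  have a2 : g' *: u T' = Q L - e' by rewrite EL' addrK.
  rewrite a1 a2 vid.
  have := ler_normB (Q K - Q L) e; have := ler_normD (Q K - Q L - e) e'; lra.
lra.
Qed.

Lemma construct : exists f : X -> Y, Lip0 M b f /\ ~ NA M b f.
Proof. exists F; split; [exact: F_lip0 | exact: notNA]. Qed.
End PartC.

Lemma caseU (R : realType) (X : normedModType R) (M : set X) b :
  (forall r, exists x, M x /\ r <= `|x - b|) ->
  exists x : nat -> X, (forall n, M (x n)) /\ (forall n, 0 < `|x n - b|) /\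
   (forall n m, n <> m -> 3 * `|x m - b| <= ee R n * ee R n * `|x n - b| \/
                         3 * `|x n - b| <= ee R m * ee R m * `|x m - b|).
Proof.
move=> U.
have step : forall p : nat * X, exists x', M x' /\
    3 * `|p.2 - b| <= ee R p.1.+1 * ee R p.1.+1 * `|x' - b| /\ `|p.2 - b| + 1 <= `|x' - b|.
  case=> n z /=; set A := `|z - b|; set E := ee R n.+1 * ee R n.+1.
  have E0 : 0 < E by rewrite mulr_gt0 // ee_pos.
  have A0 : 0 <= A by rewrite normr_ge0.
  have [x' [Mx' hx']] := U (3 * A / E + A + 1).
  have h0 : 0 <= 3 * A / E.
    by apply: divr_ge0; [apply: mulr_ge0 | apply: ltW].
  exists x'; split => //; split; last by lra.
  have h : 3 * A / E <= `|x' - b| by lra.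
  have h2 : 3 * A = E * (3 * A / E) by rewrite mulrCA mulfV ?mulr1 // gt_eqF.
  rewrite h2; apply: ler_wpM2l => //; exact: ltW.
have [g hg] := choice step.
have [x0 [Mx0 hx0]] := U 1.
pose x := fix x n := match n with 0%N => x0 | n'.+1 => g (n', x n') end.
have Mx : forall n, M (x n) by case=> [|n] //=; exact: (hg _).1.
have t1 : forall n, `|x n - b| + 1 <= `|x n.+1 - b| by move=> n; exact: (hg (n, x n)).2.2.
have t2 : forall n, 3 * `|x n - b| <= ee R n.+1 * ee R n.+1 * `|x n.+1 - b|.
  by move=> n; exact: (hg (n, x n)).2.1.
have mono : forall m n, (m <= n)%N -> `|x m - b| <= `|x n - b|.
  move=> m n /subnK <-; elim: (n - m)%N => [|k IH] //=.
  by rewrite ?addSn; apply: le_trans IH _; have := t1 (k + m)%N; lra.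
have pos : forall n, 0 < `|x n - b|.
  by case=> [|n]; [apply: lt_le_trans hx0 | have := t1 n; have := normr_ge0 (x n - b); lra].
have sep : forall m n, (m < n)%N -> 3 * `|x m - b| <= ee R n * ee R n * `|x n - b|.
  move=> m [//|n] mn; apply: le_trans (t2 n).
  have := mono m n; rewrite -ltnS => /(_ mn); lra.
exists x; split => //; split => // n m nm.
have [lt|gt|eq] := ltngtP m n; last by exfalso; apply: nm; rewrite eq.
  by left; apply: sep.
by right; apply: sep.
Qed.

Lemma caseC (R : realType) (X : normedModType R) (M : set X) b c :
  (forall eps, 0 < eps -> exists x, [/\ M x, 0 < `|x - c| & `|x - c| < eps]) ->
  exists x : nat -> X, (forall n, M (x n)) /\ (forall n, 0 < `|x n - c|) /\
   (forall n, (1 - ee R n) * `|x n - c| <= `|b - x n|) /\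
   (forall n m, n <> m -> 3 * `|x m - c| <= ee R n * ee R n * `|x n - c| \/
                         3 * `|x n - c| <= ee R m * ee R m * `|x m - c|).
Proof.
move=> C.
have [be [be0 hbe]] : exists be : R, 0 < be /\
    forall y, `|y - c| <= be -> `|y - c| <= `|b - y|.
  have [->|bc] := eqVneq b c.
    by exists 1; split => // y _; rewrite distrC.
  have bc0 : 0 < `|b - c| by rewrite normr_gt0 subr_eq0.
  exists (`|b - c| / 2); split; first by rewrite divr_gt0.
  move=> y hy; have := ler_normD (b - y) (y - c); rewrite -vsub3; lra.
have step : forall p : nat * X, exists x', 0 < `|p.2 - c| -> [/\ M x', 0 < `|x' - c|,
    3 * `|x' - c| <= ee R p.1 * ee R p.1 * `|p.2 - c| & `|x' - c| <= be].
  case=> n z /=; have [zc|zc] := pselect (0 < `|z - c|); last by exists c.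
  set E := ee R n * ee R n.
  have E0 : 0 < E by rewrite mulr_gt0 // ee_pos.
  have ep : 0 < Num.min be (E * `|z - c| / 3).
    by rewrite lt_min be0 /= divr_gt0 // mulr_gt0.
  have [x' [Mx' h1 h2]] := C _ ep.
  move: h2; rewrite lt_min => /andP[h2 h3].
  exists x' => _; split => //; [lra | exact: ltW].
have [g hg] := choice step.
have [x0 [Mx0 hx0 hx0']] := C _ be0.
pose x := fix x n := match n with 0%N => x0 | n'.+1 => g (n', x n') end.
have inv : forall n, [/\ M (x n), 0 < `|x n - c| & `|x n - c| <= be].
  elim=> [|n [h1 h2 h3]]; first by split => //; exact: ltW.
  by have [] := hg (n, x n) h2.
have tp : forall n, 0 < `|x n - c| by move=> n; case: (inv n).
have t2 : forall n, 3 * `|x n.+1 - c| <= ee R n * ee R n * `|x n - c|.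
  by move=> n; have [_ _ ? _] := hg (n, x n) (tp n).
have t1 : forall n, `|x n.+1 - c| <= `|x n - c|.
  move=> n; have := t2 n.
  have k : ee R n * ee R n * `|x n - c| <= `|x n - c|.
    apply: ler_piMl; first exact: ltW (tp n).
    have := ee_le R n; have := ee_pos R n; generalize (ee R n) => ? ? ?; nra.
  have := tp n.+1; lra.
have mono : forall m n, (m <= n)%N -> `|x n - c| <= `|x m - c|.
  move=> m n /subnK <-; elim: (n - m)%N => [|k IH] //=.
  by rewrite ?addSn; apply: le_trans _ IH; apply: t1.
have sep : forall m n, (m < n)%N -> 3 * `|x n - c| <= ee R m * ee R m * `|x m - c|.
  move=> m [//|n] mn; apply: le_trans (t2 m).
  have := mono m.+1 n.+1 mn; lra.
exists x; split; first by move=> n; case: (inv n).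
split; first by move=> n; case: (inv n).
split.
  move=> n; have [_ h1 h2] := inv n; apply: le_trans (hbe _ h2).
  rewrite mulrBl mul1r; have : 0 <= ee R n * `|x n - c| by rewrite mulr_ge0 // ltW // ee_pos.
  lra.
move=> n m nm.
have [lt|gt|eq] := ltngtP m n; last by exfalso; apply: nm; rewrite eq.
  by right; apply: sep.
by left; apply: sep.
Qed.

Theorem corollary2p8 (R : realType) (X : normedModType R)
  (Y : completeNormedModType R) (M : set X) (b : X) :
  finite_dim X -> ~ finite_dim Y ->
  infinite_set M -> closed M -> M b ->
  NA (Y := Y) M b `<` Lip0 (Y := Y) M b.
Proof.
move=> fdX nfdY hinf hcl Mb.
have [u [hu1 hu2]] := riesz_seq nfdY.
have [f [hL hN]] : exists f : X -> Y, Lip0 M b f /\ ~ NA M b f.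
  have [U|[c [Mc C]]] := dichot b fdX hinf hcl.
    have [x [Mx [tp Hs]]] := caseU U.
    apply: (construct hu1 hu2 Mb Mx tp _ Hs) => n /=.
    rewrite [X in _ <= X]distrC mulrBl mul1r.
    have : 0 <= ee R n * `|x n - b| by rewrite mulr_ge0 // ltW // ee_pos.
    lra.
  have [x [Mx [tp [Hb Hs]]]] := caseC b C.
  exact: (construct hu1 hu2 Mc Mx tp Hb Hs).
split; first by move=> g [].
by move=> h; apply: hN; apply: h.
Qed.
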